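(* Let $d\ge2$. Let $C\subseteq\mathbb Z^d$ be a cube and let $\mathcal C$ be a collection of cubes such that $\mathrm{nbhd}(C')\subseteq C$ for every $C'\in\mathcal C$ and $\mathrm{nbhd}(C')\cap\mathrm{nbhd}(C'')=\emptyset$ for all distinct $C',C''\in\mathcal C$. Put $$E=\mathrm{edges}^+(C)\setminus\bigcup\{\mathrm{edges}(\mathrm{nbhd}(C')):C'\in\mathcal C\}.$$ Let $f:\mathbb Z^d\to\mathbb Z$ and let $\varphi:G\to\mathbb R$ be a bounded $f$-flow on the Cayley graph $G$ of $\mathbb Z^d$. Then there exists an $f$-flow $\psi:G\to\mathbb R$ such that: (i) $\mathrm{supp}(\varphi-\psi)\subseteq\mathrm{edges}(\mathrm{nbhd}(C))$; (ii) for every $C'\in\mathcal C$, $(\varphi-\psi)(x,y)=0$ whenever $(x,y)\in\mathrm{edges}^+(C')$ or $(y,x)\in\mathrm{edges}^+(C')$; (iii) $\psi(e)\in\mathbb Z$ for every edge $e\in E$; (iv) $|\varphi-\psi|<6d$ on every edge.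
   Context: $G=\{(x,x')\in\mathbb Z^d\times\mathbb Z^d: x'-x\in\{\pm e_1,\dots,\pm e_d\}\}$ is the Cayley graph of $\mathbb Z^d$; an edge $(x,x')$ is positively oriented if $x'-x=e_j$ for some $j$. For $A\subseteq\mathbb Z^d$: $\mathrm{edges}(A)=\{(x,x+e_j):1\le j\le d,\ \{x,x+e_j\}\subseteq A\}$; $\mathrm{edges}^+(A)=\{(x,x+e_j):1\le j\le d,\ \{x,x+e_j\}\cap A\ne\emptyset\}$; $\mathrm{nbhd}(A)=\{x+y:x\in A,\ y\in\{-1,0,1\}^d\}$. A cube is a set of the form $\{n_1,\dots,n_1+k_1\}\times\dots\times\{n_d,\dots,n_d+k_d\}$ with $n_i\in\mathbb Z$, $k_i\ge0$. An $f$-flow is $\varphi:G\to\mathbb R$ with $\varphi(x,y)=-\varphi(y,x)$ and $f(x)=\sum_{(x,y)\in G}\varphi(x,y)$ for all $x$. For antisymmetric $\eta$, ''$\mathrm{supp}(\eta)\subseteq\mathcal E$'' for a set $\mathcal E$ of positively oriented edges means $\eta(x,y)=0$ unless $(x,y)\in\mathcal E$ or $(y,x)\in\mathcal E$. *)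

(* Defs.v *)
From Stdlib Require Import Reals ZArith List.
Open Scope R_scope.

(* Points of Z^d are represented as functions nat -> Z whose coordinates
   of index >= d vanish. *)
Definition pt := nat -> Z.
Definition inZd (d : nat) (x : pt) : Prop := forall i, (d <= i)%nat -> x i = 0%Z.

Definition shift (x : pt) (j : nat) (s : Z) : pt :=
  fun i => if Nat.eqb i j then (x i + s)%Z else x i.

Definition adj (d : nat) (x y : pt) : Prop :=
  inZd d x /\ exists j, (j < d)%nat /\ (y = shift x j 1 \/ y = shift x j (-1)).

Definition pset := pt -> Prop.

Definition isCube (d : nat) (A : pset) : Prop :=
  exists n k : nat -> Z, (forall i, (0 <= k i)%Z) /\
    forall x, A x <-> (inZd d x /\ forall i, (i < d)%nat -> (n i <= x i <= n i + k i)%Z).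

Definition nbhd (d : nat) (A : pset) : pset :=
  fun y => exists x z, A x /\ inZd d z /\
    (forall i, (i < d)%nat -> (-1 <= z i <= 1)%Z) /\ y = (fun i => (x i + z i)%Z).

Definition edges (d : nat) (A : pset) (x y : pt) : Prop :=
  inZd d x /\ exists j, (j < d)%nat /\ y = shift x j 1 /\ A x /\ A y.

Definition edgesP (d : nat) (A : pset) (x y : pt) : Prop :=
  inZd d x /\ exists j, (j < d)%nat /\ y = shift x j 1 /\ (A x \/ A y).

Definition outflow (d : nat) (phi : pt -> pt -> R) (x : pt) : R :=
  fold_right (fun j acc => phi x (shift x j 1) + phi x (shift x j (-1)) + acc) 0 (seq 0 d).

Definition isFlow (d : nat) (f : pt -> Z) (phi : pt -> pt -> R) : Prop :=
  (forall x y, adj d x y -> phi x y = - phi y x) /\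
  (forall x, inZd d x -> IZR (f x) = outflow d phi x).

Definition boundedFlow (d : nat) (phi : pt -> pt -> R) : Prop :=
  exists M, forall x y, adj d x y -> Rabs (phi x y) <= M.

(* supp(eta) ⊆ E, for E a set of positively oriented edges *)
Definition suppIn (d : nat) (eta : pt -> pt -> R) (E : pt -> pt -> Prop) : Prop :=
  forall x y, adj d x y -> ~ E x y -> ~ E y x -> eta x y = 0.

(* Main.v *)
Require Import Defs.
From Stdlib Require Import Reals ZArith List Lia Lra Classical ClassicalEpsilon FunctionalExtensionality Permutation.
Require Import Defs.
Open Scope R_scope.

Definition isZ (r : R) : Prop := exists z : Z, r = IZR z.

Lemma isZ_IZR z : isZ (IZR z). Proof. exists z; reflexivity. Qed.
Lemma isZ_0 : isZ 0. Proof. exists 0%Z; reflexivity. Qed.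
Lemma isZ_add a b : isZ a -> isZ b -> isZ (a + b).
Proof. intros [x ->] [y ->]; exists (x + y)%Z; rewrite plus_IZR; reflexivity. Qed.
Lemma isZ_opp a : isZ a -> isZ (- a).
Proof. intros [x ->]; exists (- x)%Z; rewrite opp_IZR; reflexivity. Qed.
Lemma isZ_sub a b : isZ a -> isZ b -> isZ (a - b).
Proof. intros; unfold Rminus; apply isZ_add; auto; apply isZ_opp; auto. Qed.
Lemma isZ_eq a b : a = b -> isZ a -> isZ b. Proof. intros ->; auto. Qed.
Lemma frac_isZ r : isZ (r - frac_part r).
Proof. unfold frac_part. exists (Int_part r). ring. Qed.
Lemma frac_bounds r : 0 <= frac_part r < 1.
Proof. destruct (base_fp r); lra. Qed.

Definition sumL {A : Type} (l : list A) (F : A -> R) : R :=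
  fold_right (fun a acc => F a + acc) 0 l.

Lemma sumL_nil {A} (F : A -> R) : sumL nil F = 0. Proof. reflexivity. Qed.
Lemma sumL_cons {A} (a : A) l F : sumL (a :: l) F = F a + sumL l F. Proof. reflexivity. Qed.
Lemma sumL_ext {A} (l : list A) F G : (forall a, In a l -> F a = G a) -> sumL l F = sumL l G.
Proof. induction l; simpl; intros H; auto. rewrite H by auto; rewrite IHl; auto. Qed.
Lemma sumL_app {A} (l1 l2 : list A) F : sumL (l1 ++ l2) F = sumL l1 F + sumL l2 F.
Proof. induction l1; simpl. lra. unfold sumL in *; simpl. rewrite IHl1; lra. Qed.
Lemma sumL_plus {A} (l : list A) F G : sumL l (fun a => F a + G a) = sumL l F + sumL l G.
Proof. induction l; simpl. lra. unfold sumL in *; simpl in *. rewrite IHl; lra. Qed.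
Lemma sumL_opp {A} (l : list A) F : sumL l (fun a => - F a) = - sumL l F.
Proof. induction l; simpl. lra. unfold sumL in *; simpl in *. rewrite IHl; lra. Qed.
Lemma sumL_minus {A} (l : list A) F G : sumL l (fun a => F a - G a) = sumL l F - sumL l G.
Proof. unfold Rminus. rewrite sumL_plus, sumL_opp. reflexivity. Qed.
Lemma sumL_map {A B} (f : A -> B) l F : sumL (map f l) F = sumL l (fun a => F (f a)).
Proof. induction l; simpl; auto. unfold sumL in *; simpl; rewrite IHl; auto. Qed.
Lemma sumL_perm {A} (l l' : list A) F : Permutation l l' -> sumL l F = sumL l' F.
Proof. induction 1; unfold sumL in *; simpl in *; try lra. Qed.
Lemma sumL_filter {A} (l : list A) (P : A -> bool) F :
  sumL l F = sumL (filter P l) F + sumL (filter (fun a => negb (P a)) l) F.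
Proof. induction l; simpl. lra. destruct (P a); simpl; unfold sumL in *; simpl; rewrite IHl; lra. Qed.
Lemma sumL_isZ {A} (l : list A) F : (forall a, In a l -> isZ (F a)) -> isZ (sumL l F).
Proof. induction l; simpl; intros H. apply isZ_0. apply isZ_add; auto. Qed.
Lemma sumL_zero {A} (l : list A) : sumL l (fun _ => 0) = 0.
Proof. induction l; simpl; auto. unfold sumL in *; simpl; rewrite IHl; lra. Qed.
Lemma sumL_swap {A B} (l1 : list A) (l2 : list B) (F : A -> B -> R) :
  sumL l1 (fun a => sumL l2 (F a)) = sumL l2 (fun b => sumL l1 (fun a => F a b)).
Proof.
  induction l1.
  - symmetry. apply sumL_zero.
  - rewrite sumL_cons. rewrite IHl1.
    rewrite <- sumL_plus. apply sumL_ext. intros; reflexivity.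
Qed.
Lemma sumL_one_notZ {A} (l : list A) F x :
  NoDup l -> In x l -> (forall y, In y l -> y <> x -> isZ (F y)) -> isZ (sumL l F) -> isZ (F x).
Proof.
  induction l as [|a l IH]; intros Hnd Hin Hy Hs; simpl in Hin; [contradiction|].
  apply NoDup_cons_iff in Hnd as [Hna Hnd].
  destruct Hin as [<-|Hin].
  - assert (isZ (sumL l F)). { apply sumL_isZ. intros y Hy'. apply Hy; [right; auto | intros ->; contradiction]. }
    replace (F a) with (sumL (a :: l) F - sumL l F) by (rewrite sumL_cons; ring).
    apply isZ_sub; auto.
  - assert (Ha : a <> x) by (intros ->; contradiction).
    apply IH; [exact Hnd|exact Hin| intros y Hy1 Hy2; apply Hy; [right; auto|auto] |].
    rewrite sumL_cons in Hs.
    replace (sumL l F) with (F a + sumL l F - F a) by ring. apply isZ_sub; auto.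
    apply Hy; [left; auto|auto].
Qed.

Lemma shift_app x j s i : shift x j s i = if Nat.eqb i j then (x i + s)%Z else x i.
Proof. reflexivity. Qed.
Lemma shift_inv x j s : shift (shift x j s) j (- s) = x.
Proof. apply functional_extensionality; intro i; unfold shift.
  destruct (Nat.eqb i j); lia. Qed.
Lemma shift_inv1 x j : shift (shift x j 1) j (-1) = x.
Proof. apply (shift_inv x j 1). Qed.
Lemma shift_inv2 x j : shift (shift x j (-1)) j 1 = x.
Proof. apply functional_extensionality; intro i; unfold shift.
  destruct (Nat.eqb i j); lia. Qed.
Lemma shift_comm x i j a b : shift (shift x i a) j b = shift (shift x j b) i a.
Proof. apply functional_extensionality; intro k; unfold shift.
  destruct (Nat.eqb k i), (Nat.eqb k j); lia. Qed.
Lemma shift_inj x y j s : shift x j s = shift y j s -> x = y.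
Proof. intro H. rewrite <- (shift_inv x j s), <- (shift_inv y j s), H. reflexivity. Qed.
Lemma shift_ne x j j' s s' : (s <> 0)%Z -> (s' <> 0)%Z -> (j <> j' \/ s <> s') ->
  shift x j s <> shift x j' s'.
Proof.
  intros H1 H2 H3 E. assert (E1 := f_equal (fun y => y j) E). assert (E2 := f_equal (fun y => y j') E).
  unfold shift in E1, E2. rewrite Nat.eqb_refl in E1, E2.
  destruct (Nat.eqb j j') eqn:Ej.
  - apply Nat.eqb_eq in Ej; subst. destruct H3; [congruence|lia].
  - rewrite Nat.eqb_sym, Ej in E2. lia.
Qed.
Lemma inZd_shift d x j s : (j < d)%nat -> inZd d x -> inZd d (shift x j s).
Proof. intros Hj Hx i Hi. unfold shift. destruct (Nat.eqb_spec i j); [lia|auto]. Qed.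

Definition inBoxI (I : list nat) (lo hi : nat -> Z) (p v : pt) : Prop :=
  (forall i, In i I -> (lo i <= v i <= hi i)%Z) /\ (forall i, ~ In i I -> v i = p i).
Definition vstar (I : list nat) (hi : nat -> Z) (p : pt) : pt :=
  fun i => if in_dec Nat.eq_dec i I then hi i else p i.
Definition Dv (I : list nat) (g : nat -> pt -> R) (v : pt) : R :=
  sumL I (fun j => g j v - g j (shift v j (-1))).
Definition upd (p : pt) (i : nat) (t : Z) : pt := fun k => if Nat.eqb k i then t else p k.

Lemma inBoxI_cons i I lo hi p v : ~ In i I ->
  (inBoxI (i :: I) lo hi p v <-> ((lo i <= v i <= hi i)%Z /\ inBoxI I lo hi (upd p i (v i)) v)).
Proof.
  intros Hi; unfold inBoxI, upd; split.
  - intros [H1 H2]; split; [apply H1; left; auto|split].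
    + intros k Hk; apply H1; right; auto.
    + intros k Hk. destruct (Nat.eqb_spec k i); [subst; auto|].
      apply H2. intros [->|?]; auto.
  - intros [H1 [H2 H3]]; split.
    + intros k [<-|Hk]; auto.
    + intros k Hk. rewrite H3 by (intro; apply Hk; right; auto).
      destruct (Nat.eqb_spec k i); auto. exfalso; apply Hk; left; auto.
Qed.

Fixpoint gamF (X : Z -> R) (lo : Z) (n : nat) : R :=
  match n with
  | O => frac_part (X lo + 0)
  | S m => frac_part (X (lo + Z.of_nat (S m))%Z + gamF X lo m)
  end.

Definition gamZ (X : Z -> R) (lo hi : Z) (t : Z) : R :=
  if andb (lo <=? t)%Z (t <? hi)%Z then gamF X lo (Z.to_nat (t - lo)) else 0.

Lemma gamZ_out X lo hi t : ~ (lo <= t < hi)%Z -> gamZ X lo hi t = 0.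
Proof. intros H. unfold gamZ. destruct (Z.leb_spec lo t), (Z.ltb_spec t hi); simpl; auto; lia. Qed.

Lemma gamZ_step X lo hi t : (lo <= t < hi)%Z ->
  gamZ X lo hi t = frac_part (X t + gamZ X lo hi (t - 1)).
Proof.
  intros H. unfold gamZ at 1. destruct (Z.leb_spec lo t), (Z.ltb_spec t hi); try lia. simpl.
  destruct (Z.eq_dec t lo) as [->|Hne].
  - replace (lo - lo)%Z with 0%Z by lia. simpl. rewrite gamZ_out by lia. reflexivity.
  - remember (Z.to_nat (t - lo)) as n. destruct n as [|m]; [lia|].
    simpl gamF. unfold gamZ. destruct (Z.leb_spec lo (t-1)), (Z.ltb_spec (t-1) hi); try lia. simpl.
    replace (Z.to_nat (t - 1 - lo)) with m by lia.
    f_equal; f_equal; f_equal; lia.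
Qed.

Lemma gamZ_bounds X lo hi t : 0 <= gamZ X lo hi t < 1.
Proof. unfold gamZ. destruct (andb _ _).
  - destruct (Z.to_nat (t - lo)); simpl; apply frac_bounds.
  - lra. Qed.

Definition FaceSpec (I : list nat) (lo hi : nat -> Z) (p : pt) (c : pt -> R) (g : nat -> pt -> R) : Prop :=
    (forall j v, 0 <= g j v < 1) /\
    (forall j v, g j v <> 0 -> In j I /\ inBoxI I lo hi p v /\ inBoxI I lo hi p (shift v j 1)) /\
    (forall v, inBoxI I lo hi p v -> v <> vstar I hi p -> isZ (Dv I g v - c v)).

Lemma face_lemma : forall I, NoDup I -> forall lo hi p (c : pt -> R),
  (forall i, In i I -> (lo i <= hi i)%Z) -> exists g, FaceSpec I lo hi p c g.
Proof.
  induction I as [|i I IH]; intros Hnd lo hi p c Hlh.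
  - exists (fun _ _ => 0). split; [|split].
    + intros; lra.
    + intros j v H; lra.
    + intros v [_ Hv] Hne. exfalso; apply Hne. apply functional_extensionality; intro k.
      unfold vstar. destruct (in_dec Nat.eq_dec k nil) as [[]|]; auto.
  - apply NoDup_cons_iff in Hnd as [Hni Hnd].
    assert (HG : forall t : Z, exists g, FaceSpec I lo hi (upd p i t) c g).
    { intro t; apply IH; auto. intros; apply Hlh; right; auto. }
    set (G := fun t => proj1_sig (constructive_indefinite_description _ (HG t))).
    assert (GS : forall t, FaceSpec I lo hi (upd p i t) c (G t)).
    { intro t. unfold G. exact (proj2_sig (constructive_indefinite_description _ (HG t))). }
    clearbody G.
    set (w := fun t => vstar I hi (upd p i t)).
    set (X := fun t => c (w t) - Dv I (G t) (w t)).
    set (gz := gamZ X (lo i) (hi i)).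
    exists (fun j v => if Nat.eqb j i then
                 (if excluded_middle_informative (v = w (v i)) then gz (v i) else 0)
               else (if andb (lo i <=? v i)%Z (v i <=? hi i)%Z then G (v i) j v else 0)).
    assert (Hwi : forall t, w t i = t).
    { intro t. unfold w, vstar, upd. destruct (in_dec Nat.eq_dec i I); [contradiction|].
      rewrite Nat.eqb_refl; auto. }
    assert (Hwsh : forall t, shift (w t) i (-1) = w (t - 1)%Z).
    { intro t; apply functional_extensionality; intro k. unfold w, vstar, upd, shift.
      destruct (Nat.eqb_spec k i).
      - subst. match goal with |- context [in_dec _ ?a I] => destruct (in_dec Nat.eq_dec a I); [contradiction|] end. rewrite ?Nat.eqb_refl; lia.
      - destruct (in_dec Nat.eq_dec k I); auto. }
    split; [|split].
    + intros j v. destruct (Nat.eqb j i).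
      * destruct excluded_middle_informative; [apply gamZ_bounds|lra].
      * destruct (andb _ _); [apply GS|lra].
    + intros j v Hg. destruct (Nat.eqb_spec j i) as [->|Hji].
      * destruct excluded_middle_informative as [Hv|]; [|lra].
        assert (Hr : (lo i <= v i < hi i)%Z).
        { destruct (Z_lt_le_dec (v i) (hi i)); destruct (Z_le_gt_dec (lo i) (v i)); auto; 
          exfalso; apply Hg; unfold gz; rewrite gamZ_out; auto; lia. }
        assert (Hbox : forall t, (lo i <= t <= hi i)%Z -> inBoxI (i :: I) lo hi p (w t)).
        { intros t Ht. apply inBoxI_cons; auto. rewrite Hwi. split; auto.
          split.
          - intros k Hk. unfold w, vstar. destruct (in_dec Nat.eq_dec k I); [|contradiction].
            specialize (Hlh k (or_intror Hk)); lia.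
          - intros k Hk. unfold w, vstar. destruct (in_dec Nat.eq_dec k I); [contradiction|]. auto. }
        split; [left; auto|split].
        -- rewrite Hv. apply Hbox. lia.
        -- assert (shift v i 1 = w (v i + 1)%Z).
           { rewrite Hv at 1. rewrite <- (shift_inv2 (w (v i + 1)%Z) i). rewrite Hwsh.
             f_equal. f_equal. lia. }
           rewrite H. apply Hbox. lia.
      * destruct (Z.leb_spec (lo i) (v i)), (Z.leb_spec (v i) (hi i)); simpl in Hg; try lra.
        destruct (proj1 (proj2 (GS (v i))) j v Hg) as [Hj [Hb1 Hb2]].
        split; [right; auto|split].
        -- apply inBoxI_cons; auto.
        -- assert (Hsi : shift v j 1 i = v i).
           { unfold shift. rewrite (proj2 (Nat.eqb_neq i j)) by auto. reflexivity. }
           apply inBoxI_cons; auto. rewrite Hsi. split; auto.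
    + intros v Hv Hne. apply inBoxI_cons in Hv as [Hti Hv]; auto.
      remember (v i) as t eqn:Ht.
      unfold Dv. rewrite sumL_cons.
      rewrite (sumL_ext I _ (fun j => G t j v - G t j (shift v j (-1)))).
      2:{ intros j Hj. cbv beta.
        assert (Hji : j <> i) by (intros ->; contradiction).
        rewrite (proj2 (Nat.eqb_neq j i) Hji).
        assert (Hs : shift v j (-1) i = t).
        { unfold shift. rewrite (proj2 (Nat.eqb_neq i j)) by auto. auto. }
        rewrite Hs, <- Ht.
        destruct (Z.leb_spec (lo i) t), (Z.leb_spec t (hi i)); simpl; try lia. reflexivity. }
      fold (Dv I (G t) v). cbv beta.
      rewrite Nat.eqb_refl.
      assert (Hu : shift v i (-1) i = (t - 1)%Z).
      { unfold shift. rewrite Nat.eqb_refl. lia. }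
      rewrite Hu, <- Ht.
      destruct (excluded_middle_informative (v = w t)) as [Hvw|Hvw].
      * assert (Hu2 : shift v i (-1) = w (t - 1)%Z) by (rewrite Hvw; apply Hwsh).
        destruct (excluded_middle_informative (shift v i (-1) = w (t - 1)%Z)) as [_|]; [|contradiction].
        assert (Htl : (t < hi i)%Z).
        { destruct (Z.eq_dec t (hi i)); [|lia]. exfalso; apply Hne. rewrite Hvw.
          apply functional_extensionality; intro k. unfold w, vstar, upd.
          destruct (Nat.eqb_spec k i) as [->|Hki].
          - destruct (in_dec Nat.eq_dec i (i::I)) as [_|Hn]; [|exfalso; apply Hn; left; auto].
            destruct (in_dec Nat.eq_dec i I); [contradiction|]. lia.
          - destruct (in_dec Nat.eq_dec k I) as [Hk|Hk];
            destruct (in_dec Nat.eq_dec k (i::I)) as [Hk'|Hk']; auto.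
            + exfalso; apply Hk'; right; auto.
            + destruct Hk' as [->|?]; [congruence|contradiction]. }
        unfold gz. rewrite (gamZ_step X (lo i) (hi i) t) by lia.
        set (Y := X t + gamZ X (lo i) (hi i) (t - 1)).
        do 2 (match goal with |- context [excluded_middle_informative ?P] =>
          destruct (excluded_middle_informative P); [|contradiction] end).
        replace (frac_part Y - gamZ X (lo i) (hi i) (t - 1) + Dv I (G t) v - c v)
          with (- (Y - frac_part Y)).
        2:{ unfold Y, X. rewrite <- Hvw. ring. }
        apply isZ_opp, frac_isZ.
      * assert (Hu2 : shift v i (-1) <> w (t - 1)%Z).
        { intro E. apply Hvw. rewrite <- Hwsh in E. apply shift_inj in E. auto. }
        destruct (excluded_middle_informative (shift v i (-1) = w (t - 1)%Z)); [contradiction|].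
        do 2 (match goal with |- context [excluded_middle_informative ?P] =>
          destruct (excluded_middle_informative P); [contradiction|] end).
        replace (0 - 0 + Dv I (G t) v - c v) with (Dv I (G t) v - c v) by ring.
        apply (proj2 (proj2 (GS t))); auto.
Qed.

Fixpoint zrange (a : Z) (n : nat) : list Z :=
  match n with O => nil | S m => a :: zrange (a + 1)%Z m end.

Lemma In_zrange a n t : In t (zrange a n) <-> (a <= t < a + Z.of_nat n)%Z.
Proof. revert a; induction n; intro a; simpl; [lia|]. rewrite IHn. lia. Qed.
Lemma NoDup_zrange a n : NoDup (zrange a n).
Proof. revert a; induction n; intro a; simpl; constructor; auto.
  rewrite In_zrange; lia. Qed.

Fixpoint boxList (I : list nat) (lo hi : nat -> Z) (p : pt) : list pt :=
  match I with
  | nil => p :: nil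
  | i :: I' => flat_map (fun t => boxList I' lo hi (upd p i t)) (zrange (lo i) (Z.to_nat (hi i - lo i + 1)))
  end.

Lemma NoDup_flat_map {A B} (f : A -> list B) (l : list A) :
  NoDup l -> (forall a, In a l -> NoDup (f a)) ->
  (forall a b x, In a l -> In b l -> In x (f a) -> In x (f b) -> a = b) -> NoDup (flat_map f l).
Proof.
  induction l as [|a l IH]; simpl; intros Hl Hf Hd; [constructor|].
  apply NoDup_cons_iff in Hl as [Ha Hl].
  apply NoDup_app.
  { apply Hf; left; auto. }
  { apply IH; [exact Hl| |].
    - intros b Hb; apply Hf; right; exact Hb.
    - intros a0 b x H1 H2 H3 H4. apply (Hd a0 b x); auto. }
  intros x Hx Hx2. apply in_flat_map in Hx2 as [b [Hb Hxb]].
  assert (a = b) by (apply (Hd a b x); auto). subst; contradiction.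
Qed.

Lemma upd_in_box I lo hi p i t v : ~ In i I -> inBoxI I lo hi (upd p i t) v -> v i = t.
Proof. intros Hi [_ H]. rewrite H by auto. unfold upd. rewrite Nat.eqb_refl. auto. Qed.

Lemma boxList_In I lo hi p v : NoDup I -> (In v (boxList I lo hi p) <-> inBoxI I lo hi p v).
Proof.
  revert p v; induction I as [|i I IH]; intros p v Hnd; simpl.
  - split.
    + intros [<-|[]]. split; [intros _ []|auto].
    + intros [_ H]. left. apply functional_extensionality; intro k; symmetry; apply H; auto.
  - apply NoDup_cons_iff in Hnd as [Hi Hnd].
    rewrite in_flat_map. rewrite inBoxI_cons by auto. split.
    + intros [t [Ht Hv]]. apply In_zrange in Ht. apply IH in Hv; auto.
      assert (v i = t) by (eapply upd_in_box; eauto). subst. split; auto. lia.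
    + intros [Hr Hv]. exists (v i). split; [apply In_zrange; lia|]. apply IH; auto.
Qed.

Lemma boxList_NoDup I lo hi p : NoDup I -> NoDup (boxList I lo hi p).
Proof.
  revert p; induction I as [|i I IH]; intros p Hnd; simpl.
  - constructor; [intros []|constructor].
  - apply NoDup_cons_iff in Hnd as [Hi Hnd].
    apply NoDup_flat_map.
    + apply NoDup_zrange.
    + intros; apply IH; auto.
    + intros a b x _ _ Ha Hb. apply boxList_In in Ha; auto. apply boxList_In in Hb; auto.
      apply upd_in_box in Ha; auto. apply upd_in_box in Hb; auto. congruence.
Qed.

Definition bS (S : pset) (v : pt) : bool := if excluded_middle_informative (S v) then true else false.
Lemma bS_true S v : bS S v = true <-> S v.
Proof. unfold bS; destruct excluded_middle_informative; split; auto; discriminate. Qed.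

Lemma flux_lemma d (L : list pt) (S : pset) (q : pt -> pt -> R) (w : pt) :
  NoDup L -> (forall v, In v L <-> S v) -> (forall v, S v -> inZd d v) ->
  (forall x y, adj d x y -> q x y = - q y x) ->
  (forall v, S v -> isZ (outflow d q v)) ->
  (forall k v, (0 < k < d)%nat -> S v -> ~ S (shift v k 1) -> isZ (q v (shift v k 1))) ->
  (forall k u, (k < d)%nat -> inZd d u -> ~ S u -> S (shift u k 1) -> isZ (q u (shift u k 1))) ->
  (forall v, S v -> ~ S (shift v 0 1) -> v <> w -> isZ (q v (shift v 0 1))) ->
  S w -> ~ S (shift w 0 1) -> (0 < d)%nat -> isZ (q w (shift w 0 1)).
Proof.
  intros Hnd HL HZd Hanti Hout Hside Hin Hex Hw Hw0 Hd.
  set (G := fun k u => q u (shift u k 1)).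
  set (A := fun k => sumL (filter (fun v => negb (bS S (shift v k 1))) L) (G k)).
  set (B := fun k => sumL (filter (fun v => negb (bS S (shift v k (-1)))) L)
                          (fun v => G k (shift v k (-1)))).
  assert (HT : forall k, (k < d)%nat ->
     sumL L (fun v => q v (shift v k 1) + q v (shift v k (-1))) = A k - B k).
  { intros k Hk.
    rewrite (sumL_ext L _ (fun v => G k v - G k (shift v k (-1)))).
    2:{ intros v Hv. unfold G. rewrite shift_inv2. rewrite (Hanti v (shift v k (-1))). ring.
        split. apply HZd, HL; auto. exists k; split; [auto|right; auto].
        }
    rewrite sumL_minus.
    rewrite (sumL_filter L (fun v => bS S (shift v k 1)) (G k)).
    rewrite (sumL_filter L (fun v => bS S (shift v k (-1))) (fun v => G k (shift v k (-1)))).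
    rewrite <- (sumL_map (fun v => shift v k (-1)) (filter (fun v => bS S (shift v k (-1))) L) (G k)).
    rewrite (sumL_perm (map (fun v => shift v k (-1)) (filter (fun v => bS S (shift v k (-1))) L))
               (filter (fun v => bS S (shift v k 1)) L)).
    - unfold A, B. ring.
    - apply NoDup_Permutation.
      + apply FinFun.Injective_map_NoDup. intros x y E. apply shift_inj in E; auto.
        apply NoDup_filter; auto.
      + apply NoDup_filter; auto.
      + intro x. rewrite in_map_iff, filter_In. split.
        * intros [v [<- Hv]]. apply filter_In in Hv as [Hv1 Hv2]. apply bS_true in Hv2.
          split. apply HL; auto. rewrite shift_inv2. apply bS_true. apply HL; auto.
        * intros [Hx1 Hx2]. exists (shift x k 1). split; [apply shift_inv1|].
          apply filter_In. split. apply HL. apply bS_true in Hx2; auto.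
          rewrite shift_inv1. apply bS_true, HL; auto. }
  assert (HB : forall k, (k < d)%nat -> isZ (B k)).
  { intros k Hk. apply sumL_isZ. intros v Hv. apply filter_In in Hv as [Hv1 Hv2].
    apply HL in Hv1. unfold G. apply Hin; auto.
    apply inZd_shift; auto.
    intro HH. apply bS_true in HH. rewrite HH in Hv2. discriminate.
    rewrite shift_inv2; auto. }
  assert (HA : forall k, (0 < k < d)%nat -> isZ (A k)).
  { intros k Hk. apply sumL_isZ. intros v Hv. apply filter_In in Hv as [Hv1 Hv2].
    apply HL in Hv1. apply Hside; auto.
    intro HH. apply bS_true in HH. rewrite HH in Hv2. discriminate. }
  assert (Htot : isZ (sumL L (outflow d q))).
  { apply sumL_isZ. intros v Hv. apply Hout, HL; auto. }
  unfold outflow in Htot.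
  change (isZ (sumL L (fun v => sumL (seq 0 d) (fun k => q v (shift v k 1) + q v (shift v k (-1)))))) in Htot.
  rewrite sumL_swap in Htot.
  rewrite (sumL_ext (seq 0 d) _ (fun k => A k - B k)) in Htot.
  2:{ intros k Hk. apply in_seq in Hk. apply HT; lia. }
  destruct d as [|d']; [lia|].
  simpl seq in Htot. rewrite sumL_cons in Htot.
  assert (HA0 : isZ (A 0%nat)).
  { assert (H1 : isZ (sumL (seq 1 d') (fun k => A k - B k))).
    { apply sumL_isZ. intros k Hk. apply in_seq in Hk. apply isZ_sub; [apply HA|apply HB]; lia. }
    replace (A 0%nat) with ((A 0%nat - B 0%nat + sumL (seq 1 d') (fun k => A k - B k))
                            - sumL (seq 1 d') (fun k => A k - B k) + B 0%nat) by ring.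
    apply isZ_add; [apply isZ_sub; auto|apply HB; lia]. }
  unfold A in HA0.
  change (isZ (G 0%nat w)). apply (sumL_one_notZ _ (G 0%nat) w (NoDup_filter (fun v => negb (bS S (shift v 0 1))) Hnd)).
  - apply filter_In. split; [apply HL; auto|]. destruct (bS S (shift w 0 1)) eqn:E; auto.
    apply bS_true in E; contradiction.
  - intros y Hy Hne. apply filter_In in Hy as [Hy1 Hy2]. apply Hex; auto. apply HL; auto.
    intro HH. apply bS_true in HH. rewrite HH in Hy2. discriminate.
  - exact HA0.
Qed.

Definition Box (d : nat) (lo hi : nat -> Z) (v : pt) : Prop :=
  inZd d v /\ forall i, (i < d)%nat -> (lo i <= v i <= hi i)%Z.

Lemma nbhd_box d (A : pset) lo hi y :
  (forall v, A v <-> Box d lo hi v) -> (forall i, (lo i <= hi i)%Z) ->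
  (nbhd d A y <-> Box d (fun i => lo i - 1)%Z (fun i => hi i + 1)%Z y).
Proof.
  intros HA Hlh. split.
  - intros [x [z [Hx [Hz [Hzb ->]]]]]. apply HA in Hx as [Hx1 Hx2]. split.
    + intros i Hi. rewrite Hx1, Hz by auto. auto.
    + intros i Hi. specialize (Hx2 i Hi); specialize (Hzb i Hi). lia.
  - intros [Hy1 Hy2].
    exists (fun i => if (i <? d)%nat then Z.max (lo i) (Z.min (hi i) (y i)) else 0%Z).
    exists (fun i => (y i - (if (i <? d)%nat then Z.max (lo i) (Z.min (hi i) (y i)) else 0))%Z).
    split; [|split; [|split]].
    + apply HA. split.
      * intros i Hi. destruct (Nat.ltb_spec i d); [lia|auto].
      * intros i Hi. destruct (Nat.ltb_spec i d); [|lia]. specialize (Hlh i); lia.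
    + intros i Hi. destruct (Nat.ltb_spec i d); [lia|]. rewrite Hy1 by auto. lia.
    + intros i Hi. destruct (Nat.ltb_spec i d); [|lia]. specialize (Hy2 i Hi). lia.
    + apply functional_extensionality; intro i. lia.
Qed.

Definition FSol (I : list nat) (lo hi : nat -> Z) (p : pt) (c : pt -> R) : nat -> pt -> R :=
  match excluded_middle_informative (exists g, FaceSpec I lo hi p c g) with
  | left H => proj1_sig (constructive_indefinite_description _ H)
  | right _ => fun _ _ => 0
  end.

Lemma FSol_bounds I lo hi p c j v : 0 <= FSol I lo hi p c j v < 1.
Proof. unfold FSol. destruct excluded_middle_informative as [H|H].
  - destruct (proj2_sig (constructive_indefinite_description _ H)) as [H1 _]. apply H1.
  - lra. Qed.

Lemma FSol_supp I lo hi p c j v : FSol I lo hi p c j v <> 0 ->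
  In j I /\ inBoxI I lo hi p v /\ inBoxI I lo hi p (shift v j 1).
Proof. unfold FSol. destruct excluded_middle_informative as [H|H].
  - destruct (proj2_sig (constructive_indefinite_description _ H)) as [_ [H2 _]]. apply H2.
  - intro E; exfalso; apply E; reflexivity. Qed.

Lemma FSol_spec I lo hi p c v : NoDup I -> (forall i, In i I -> (lo i <= hi i)%Z) ->
  inBoxI I lo hi p v -> v <> vstar I hi p -> isZ (Dv I (FSol I lo hi p c) v - c v).
Proof. intros Hnd Hlh. unfold FSol. destruct excluded_middle_informative as [H|H].
  - destruct (proj2_sig (constructive_indefinite_description _ H)) as [_ [_ H3]]. apply H3.
  - exfalso. apply H. apply face_lemma; auto. Qed.

Lemma sumL_abs_le {A} (l : list A) F (M : R) : (forall a, In a l -> Rabs (F a) <= M) ->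
  Rabs (sumL l F) <= INR (length l) * M.
Proof.
  induction l; intros H.
  - unfold sumL; simpl. rewrite Rabs_R0. lra.
  - rewrite sumL_cons. cbn [length]. eapply Rle_trans; [apply Rabs_triang|].
    rewrite S_INR. specialize (IHl (fun b Hb => H b (or_intror Hb))). specialize (H a (or_introl eq_refl)). lra.
Qed.

Lemma sumL_indicator {A} (l : list A) (P : A -> Prop) (a : A) (r : R) :
  NoDup l -> In a l -> (forall b, In b l -> P b -> b = a) -> P a ->
  sumL l (fun b => if excluded_middle_informative (P b) then r else 0) = r.
Proof.
  induction l as [|b l IH]; intros Hnd Hin Hu Ha; [destruct Hin|].
  apply NoDup_cons_iff in Hnd as [Hb Hnd]. rewrite sumL_cons.
  destruct Hin as [<-|Hin].
  - destruct excluded_middle_informative; [|contradiction].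
    rewrite (sumL_ext _ _ (fun _ => 0)); [rewrite sumL_zero; ring|].
    intros c Hc. destruct excluded_middle_informative as [Hp|]; auto.
    apply Hu in Hp; [subst; contradiction|right; auto].
  - destruct excluded_middle_informative as [Hp|Hp].
    + apply Hu in Hp; [subst; contradiction|left; auto].
    + rewrite IH; auto. ring. intros c Hc; apply Hu; right; auto.
Qed.

Lemma sumL_indicator0 {A} (l : list A) (P : A -> Prop) (r : A -> R) :
  (forall b, In b l -> ~ P b) ->
  sumL l (fun b => if excluded_middle_informative (P b) then r b else 0) = 0.
Proof. intros H. rewrite (sumL_ext _ _ (fun _ => 0)). apply sumL_zero.
  intros b Hb. destruct excluded_middle_informative; auto. exfalso; eapply H; eauto. Qed.

Section Main.
Variables (d : nat) (n K : nat -> Z) (C : pset) (CC : pset -> Prop) (clo chi : pset -> nat -> Z)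
  (f : pt -> Z) (phi : pt -> pt -> R).
Hypothesis Hd : (2 <= d)%nat.
Hypothesis HC : forall v, C v <-> Box d n K v.
Hypothesis HnK : forall i, (n i <= K i)%Z.
Hypothesis HCC : forall C', CC C' ->
  (forall v, C' v <-> Box d (clo C') (chi C') v) /\ (forall i, (clo C' i <= chi C' i)%Z).
Hypothesis Hsub : forall C', CC C' -> forall i, (i < d)%nat ->
  (n i + 1 <= clo C' i)%Z /\ (chi C' i + 1 <= K i)%Z.
Hypothesis Hdisj : forall C' C'', CC C' -> CC C'' -> C' <> C'' ->
  forall x, ~ (nbhd d C' x /\ nbhd d C'' x).
Hypothesis Hphi : isFlow d f phi.

Definition I1 := seq 1 (d - 1).
Definition Eed (x y : pt) : Prop :=
  edgesP d C x y /\ ~ (exists C', CC C' /\ edges d (nbhd d C') x y).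
Definition Ej (y : pt) (j : nat) : Prop := Eed y (shift y j 1).

Definition loH (C' : pset) (i : nat) : Z := (clo C' i - 1)%Z.
Definition hiH (C' : pset) (i : nat) : Z := (chi C' i + 1)%Z.
Definition pH (C' : pset) : pt := fun i => if Nat.eqb i 0 then (chi C' 0 + 1)%Z else 0%Z.
Definition loF (i : nat) : Z := (n i - 1)%Z.
Definition hiF (i : nat) : Z := (K i + 1)%Z.
Definition pF : pt := fun i => if Nat.eqb i 0 then (n 0 - 1)%Z else 0%Z.

Definition isExit (C' : pset) (y : pt) : Prop :=
  CC C' /\ nbhd d C' y /\ y 0%nat = (chi C' 0 + 1)%Z.

Definition faceG (c : pt -> R) (j : nat) (y : pt) : R :=
  match excluded_middle_informative (exists C', isExit C' y) with
  | left H => let C' := proj1_sig (constructive_indefinite_description _ H) in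
              FSol I1 (loH C') (hiH C') (pH C') c j y
  | right _ => 0
  end.

Definition h0F (hp : nat -> pt -> R) (j : nat) (y : pt) : R :=
  if excluded_middle_informative ((1 <= j)%nat /\ Ej y j)
  then frac_part (hp j (shift y 0 (-1)) + phi y (shift y j 1)) else 0.
Definition ccF (hp : nat -> pt -> R) (v : pt) : R :=
  - phi v (shift v 0 1) - Dv I1 (h0F hp) v.
Definition stepH (hp : nat -> pt -> R) (j : nat) (y : pt) : R :=
  if excluded_middle_informative ((1 <= j)%nat /\ Ej y j) then h0F hp j y
  else faceG (ccF hp) j y.
Fixpoint Hlev (s : nat) : nat -> pt -> R :=
  match s with
  | O => FSol I1 loF hiF pF (fun v => - phi v (shift v 0 1))
  | S s' => stepH (Hlev s')
  end.
Definition h (j : nat) (y : pt) : R :=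
  if andb (n 0 - 1 <=? y 0%nat)%Z (y 0%nat <=? K 0)%Z
  then Hlev (Z.to_nat (y 0%nat - n 0 + 1)) j y else 0.

Definition E0 (x : pt) (j : nat) : R :=
  if Nat.eqb j 0 then Dv I1 h x else h j (shift x 0 (-1)) - h j x.
Definition eta (x y : pt) : R :=
  sumL (seq 0 d) (fun j => (if excluded_middle_informative (y = shift x j 1) then E0 x j else 0)
                          - (if excluded_middle_informative (y = shift x j (-1)) then E0 y j else 0)).
Definition psi (x y : pt) : R := phi x y + eta x y.

Lemma d_pos : (0 < d)%nat. Proof. lia. Qed.

Lemma nbhdC y : nbhd d C y <-> Box d (fun i => n i - 1)%Z (fun i => K i + 1)%Z y.
Proof. apply nbhd_box; auto. Qed.
Lemma nbhdH C' y : CC C' -> (nbhd d C' y <-> Box d (loH C') (hiH C') y).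
Proof. intros H. apply nbhd_box; apply HCC; auto. Qed.

Lemma in_I1 j : In j I1 <-> (1 <= j < d)%nat.
Proof. unfold I1. rewrite in_seq. lia. Qed.
Lemma NoDup_I1 : NoDup I1. Proof. apply seq_NoDup. Qed.
Lemma seq0d : seq 0 d = 0%nat :: I1.
Proof. unfold I1. destruct d as [|d']; [lia|]. simpl. f_equal. f_equal. lia. Qed.

Lemma shift_at x j s : shift x j s j = (x j + s)%Z.
Proof. unfold shift. rewrite Nat.eqb_refl; auto. Qed.
Lemma shift_other x j s i : i <> j -> shift x j s i = x i.
Proof. intros H. unfold shift. rewrite (proj2 (Nat.eqb_neq i j) H). auto. Qed.

Lemma Ej_char y j : inZd d y -> (j < d)%nat ->
  (Ej y j <-> (C y \/ C (shift y j 1)) /\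
              ~ (exists C', CC C' /\ nbhd d C' y /\ nbhd d C' (shift y j 1))).
Proof.
  intros Hy Hj. unfold Ej, Eed, edgesP, edges. split.
  - intros [[_ [j' [Hj' [E H]]]] H2]. split; [exact H|].
    intros [C' [HC' [H3 H4]]]. apply H2. exists C'. split; [auto|]. split; [auto|].
    exists j. repeat split; auto.
  - intros [H1 H2]. split.
    + split; auto. exists j; repeat split; auto.
    + intros [C' [HC' [_ [j' [Hj' [E [H3 H4]]]]]]]. apply H2. exists C'. split; [auto|split; [auto|auto]].
Qed.

Ltac dEM := match goal with |- context [excluded_middle_informative ?P] => destruct (excluded_middle_informative P) end.

Lemma shift_zero y j : shift y j 0 = y.
Proof. apply functional_extensionality; intro i; unfold shift; destruct (Nat.eqb i j); lia. Qed.

Lemma inBoxI1 lo hi p y : inBoxI I1 lo hi p y <->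
  (forall i, (1 <= i < d)%nat -> (lo i <= y i <= hi i)%Z) /\ y 0%nat = p 0%nat /\
  (forall i, (d <= i)%nat -> y i = p i).
Proof.
  unfold inBoxI. split.
  - intros [H1 H2]. split; [|split].
    + intros i Hi; apply H1, in_I1; auto.
    + apply H2. rewrite in_I1. lia.
    + intros i Hi; apply H2. rewrite in_I1. lia.
  - intros [H1 [H2 H3]]. split.
    + intros i Hi; apply H1, in_I1; auto.
    + intros i Hi. rewrite in_I1 in Hi. destruct i as [|i]; auto. apply H3. lia.
Qed.

Lemma HCCb C' v : CC C' -> (C' v <-> Box d (clo C') (chi C') v).
Proof. intros H; apply HCC; auto. Qed.

Lemma Hsub0 C' : CC C' -> (n 0 + 1 <= clo C' 0)%Z /\ (chi C' 0 + 1 <= K 0)%Z.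
Proof. intros H; apply Hsub; auto; lia. Qed.

Lemma near_nbhd C' u v : CC C' -> C' u -> inZd d v ->
  (forall i, (i < d)%nat -> (u i - 1 <= v i <= u i + 1)%Z) -> nbhd d C' v.
Proof.
  intros HC' Hu Hv Hn. apply nbhdH; auto. apply HCCb in Hu as [Hu1 Hu2]; auto.
  split; auto. intros i Hi. specialize (Hu2 i Hi); specialize (Hn i Hi). unfold loH, hiH; lia.
Qed.

Definition goodV (u : pt) : Prop := nbhd d C u /\ forall C', CC C' -> ~ C' u.
Definition PV (j : nat) (y : pt) : Prop :=
  (1 <= j < d)%nat /\ inZd d y /\
  forall a b : Z, (0 <= a <= 1)%Z -> (0 <= b <= 1)%Z -> goodV (shift (shift y 0 a) j b).

Lemma pv_coord y j a b i : (1 <= j)%nat ->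
  shift (shift y 0 a) j b i = (y i + (if Nat.eqb i 0 then a else 0) + (if Nat.eqb i j then b else 0))%Z.
Proof. intros Hj. unfold shift. destruct (Nat.eqb_spec i j), (Nat.eqb_spec i 0); subst; try lia. Qed.

Lemma Hlev_bounds s j y : 0 <= Hlev s j y < 1.
Proof.
  revert j y; induction s; intros j y; simpl.
  - apply FSol_bounds.
  - unfold stepH, h0F, faceG. repeat dEM; try apply frac_bounds; try apply FSol_bounds; lra.
Qed.

Lemma h_bounds j y : 0 <= h j y < 1.
Proof. unfold h. destruct (andb _ _); [apply Hlev_bounds|lra]. Qed.

Lemma h_P y s j : y 0%nat = (n 0 - 1 + Z.of_nat s)%Z -> (y 0%nat <= K 0)%Z -> h j y = Hlev s j y.
Proof.
  intros H1 H2. unfold h. destruct (Z.leb_spec (n 0 - 1) (y 0%nat)), (Z.leb_spec (y 0%nat) (K 0)); try lia.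
  simpl. f_equal. lia.
Qed.

Lemma h_out y j : ~ (n 0 - 1 <= y 0%nat <= K 0)%Z -> h j y = 0.
Proof. intros H. unfold h. destruct (Z.leb_spec (n 0 - 1) (y 0%nat)), (Z.leb_spec (y 0%nat) (K 0)); simpl; auto; lia. Qed.

Lemma Ej_inZd y j : Ej y j -> inZd d y /\ (j < d)%nat.
Proof.
  intros [[Hy [j' [Hj' [E _]]]] _]. split; auto.
  destruct (Nat.eq_dec j j'); [subst; auto|].
  exfalso. eapply (shift_ne y j j' 1 1); eauto; lia.
Qed.

Lemma C_coords v : C v -> inZd d v /\ forall i, (i < d)%nat -> (n i <= v i <= K i)%Z.
Proof. intros H. apply HC in H. exact H. Qed.

Lemma h_PV j y : h j y <> 0 -> PV j y.
Proof.
  intros Hne.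
  destruct (Z_le_dec (n 0 - 1) (y 0%nat)) as [Hl|Hl]; [|rewrite h_out in Hne by lia; lra].
  destruct (Z_le_dec (y 0%nat) (K 0)) as [Hu|Hu]; [|rewrite h_out in Hne by lia; lra].
  rewrite (h_P y (Z.to_nat (y 0%nat - n 0 + 1))) in Hne by lia.
  assert (Hn0 := HnK 0).
  destruct (Z.to_nat (y 0%nat - n 0 + 1)) as [|s] eqn:Es.
  - simpl in Hne. apply FSol_supp in Hne as [Hj [Hb1 Hb2]].
    apply in_I1 in Hj. apply inBoxI1 in Hb1 as [B1 [B0 Bd]]. apply inBoxI1 in Hb2 as [B1' _].
    specialize (B1' j Hj). rewrite shift_at in B1'. unfold pF in B0; simpl in B0.
    assert (Hy : inZd d y). { intros i Hi. rewrite Bd by lia. unfold pF. destruct (Nat.eqb_spec i 0); lia. }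
    split; [lia|]. split; [auto|]. intros a b Ha Hb. split.
    + apply nbhdC. split. { apply inZd_shift; [lia|]. apply inZd_shift; auto; lia. }
      intros i Hi. rewrite pv_coord by lia. unfold loF, hiF in *.
      destruct (Nat.eq_dec i 0) as [->|Hi0]; [rewrite Nat.eqb_refl, (proj2 (Nat.eqb_neq 0 j)) by lia; lia|].
      specialize (B1 i ltac:(lia)).
      destruct (Nat.eqb_spec i 0), (Nat.eqb_spec i j); subst; try lia.
    + intros C' HC' HCu. apply HCCb in HCu as [_ Hu']; auto. specialize (Hu' 0%nat d_pos).
      rewrite pv_coord in Hu' by lia. rewrite Nat.eqb_refl, (proj2 (Nat.eqb_neq 0 j)) in Hu' by lia.
      destruct (Hsub0 C' HC'). lia.
  - simpl in Hne. unfold stepH in Hne.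
    destruct (excluded_middle_informative ((1 <= j)%nat /\ Ej y j)) as [[Hj1 HE]|HnE].
    + destruct (Ej_inZd _ _ HE) as [Hy Hjd].
      destruct (proj1 (Ej_char y j Hy Hjd) HE) as [Hc Hn].
      assert (Hco : forall i, (i < d)%nat -> (n i - 1 <= y i <= K i)%Z /\ (i <> j -> (n i <= y i)%Z)).
      { intros i Hi. destruct Hc as [Hc|Hc]; apply C_coords in Hc as [_ Hc]; specialize (Hc i Hi).
        - lia.
        - destruct (Nat.eq_dec i j); [subst; rewrite shift_at in Hc; lia|rewrite shift_other in Hc; auto; lia]. }
      split; [lia|]. split; [auto|]. intros a b Ha Hb. split.
      * apply nbhdC. split. { apply inZd_shift; [lia|]. apply inZd_shift; auto; lia. }
        intros i Hi. rewrite pv_coord by lia. destruct (Hco i Hi) as [H1 H2].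
        destruct (Nat.eqb_spec i 0), (Nat.eqb_spec i j); subst; try lia.
      * intros C' HC' HCu. apply Hn. exists C'. split; [auto|split].
        -- apply (near_nbhd C' _ y HC' HCu Hy). intros i Hi. rewrite pv_coord by lia.
           destruct (Nat.eqb_spec i 0), (Nat.eqb_spec i j); lia.
        -- apply (near_nbhd C' _ _ HC' HCu). apply inZd_shift; auto.
           intros i Hi. rewrite pv_coord by lia. unfold shift.
           destruct (Nat.eqb_spec i 0), (Nat.eqb_spec i j); lia.
    + unfold faceG in Hne.
      destruct (excluded_middle_informative (exists C', isExit C' y)) as [Hex|]; [|lra].
      destruct (proj2_sig (constructive_indefinite_description _ Hex)) as [HC3 [Hn3 H03]].
      set (C3 := proj1_sig (constructive_indefinite_description _ Hex)) in *.
      apply FSol_supp in Hne as [Hj [Hb1 Hb2]].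
      apply in_I1 in Hj. apply inBoxI1 in Hb1 as [B1 [B0 Bd]]. apply inBoxI1 in Hb2 as [B1' _].
      specialize (B1' j Hj). rewrite shift_at in B1'.
      assert (Hy : inZd d y). { intros i Hi. rewrite Bd by lia. unfold pH. destruct (Nat.eqb_spec i 0); lia. }
      assert (Hs3 := Hsub C3 HC3).
      split; [lia|]. split; [auto|]. intros a b Ha Hb. split.
      * apply nbhdC. split. { apply inZd_shift; [lia|]. apply inZd_shift; auto; lia. }
        intros i Hi. rewrite pv_coord by lia. specialize (Hs3 i Hi). unfold loH, hiH, pH in *.
        rewrite Nat.eqb_refl in B0.
        destruct (Nat.eq_dec i 0) as [->|Hi0]; [rewrite Nat.eqb_refl, (proj2 (Nat.eqb_neq 0 j)) by lia; lia|].
        specialize (B1 i ltac:(lia)).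
        destruct (Nat.eqb_spec i 0), (Nat.eqb_spec i j); subst; try lia.
      * intros C' HC' HCu. destruct (classic (C' = C3)) as [->|Hne'].
        -- apply HCCb in HCu as [_ Hu']; auto. specialize (Hu' 0%nat d_pos).
           rewrite pv_coord in Hu' by lia. rewrite Nat.eqb_refl, (proj2 (Nat.eqb_neq 0 j)) in Hu' by lia.
           unfold pH in B0. rewrite Nat.eqb_refl in B0. lia.
        -- apply (Hdisj C' C3 HC' HC3 Hne' y). split; auto.
           apply (near_nbhd C' _ y HC' HCu Hy). intros i Hi. rewrite pv_coord by lia.
           destruct (Nat.eqb_spec i 0), (Nat.eqb_spec i j); lia.
Qed.

Lemma sumL_nz {A} (l : list A) F : sumL l F <> 0 -> exists a, In a l /\ F a <> 0.
Proof.
  intros H. apply NNPP. intro H2. apply H. rewrite (sumL_ext l F (fun _ => 0)). apply sumL_zero.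
  intros a Ha. apply NNPP. intro H3. apply H2. exists a; auto.
Qed.

Lemma PV_v j y a b : PV j y -> (0 <= a <= 1)%Z -> (0 <= b <= 1)%Z -> goodV (shift (shift y 0 a) j b).
Proof. intros [_ [_ H]]; auto. Qed.

Lemma E0_good x j : inZd d x -> (j < d)%nat -> E0 x j <> 0 -> goodV x /\ goodV (shift x j 1).
Proof.
  intros Hx Hj Hne. unfold E0 in Hne. destruct (Nat.eqb_spec j 0) as [->|Hj0].
  - unfold Dv in Hne. apply sumL_nz in Hne as [j' [Hj' Hne]].
    destruct (Req_dec (h j' x) 0) as [H0|H0].
    + assert (Hne' : h j' (shift x j' (-1)) <> 0) by (intro; apply Hne; lra).
      apply h_PV in Hne'.
      split.
      * generalize (PV_v _ _ 0 1 Hne' ltac:(lia) ltac:(lia)). rewrite shift_zero, shift_inv2. auto.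
      * generalize (PV_v _ _ 1 1 Hne' ltac:(lia) ltac:(lia)). rewrite shift_comm, shift_inv2. auto.
    + apply h_PV in H0. split.
      * generalize (PV_v _ _ 0 0 H0 ltac:(lia) ltac:(lia)). rewrite !shift_zero. auto.
      * generalize (PV_v _ _ 1 0 H0 ltac:(lia) ltac:(lia)). rewrite !shift_zero. auto.
  - destruct (Req_dec (h j x) 0) as [H0|H0].
    + assert (Hne' : h j (shift x 0 (-1)) <> 0) by (intro; apply Hne; lra).
      apply h_PV in Hne'.
      split.
      * generalize (PV_v _ _ 1 0 Hne' ltac:(lia) ltac:(lia)). rewrite shift_zero, shift_inv2. auto.
      * generalize (PV_v _ _ 1 1 Hne' ltac:(lia) ltac:(lia)). rewrite shift_inv2. auto.
    + apply h_PV in H0. split.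
      * generalize (PV_v _ _ 0 0 H0 ltac:(lia) ltac:(lia)). rewrite !shift_zero. auto.
      * generalize (PV_v _ _ 0 1 H0 ltac:(lia) ltac:(lia)). rewrite !shift_zero. auto.
Qed.

Lemma H3 y j : (1 <= j)%nat -> Ej y j -> isZ (phi y (shift y j 1) + h j (shift y 0 (-1)) - h j y).
Proof.
  intros Hj1 HE. destruct (Ej_inZd _ _ HE) as [Hy Hjd].
  destruct (proj1 (Ej_char y j Hy Hjd) HE) as [Hc _].
  assert (Hy0 : (n 0 <= y 0%nat <= K 0)%Z).
  { destruct Hc as [Hc|Hc]; apply C_coords in Hc as [_ Hc]; specialize (Hc 0%nat d_pos); auto.
    rewrite shift_other in Hc by lia. auto. }
  rewrite (h_P y (S (Z.to_nat (y 0%nat - n 0)))) by lia.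
  rewrite (h_P (shift y 0 (-1)) (Z.to_nat (y 0%nat - n 0))) by (rewrite shift_at; lia).
  simpl. unfold stepH, h0F.
  destruct (excluded_middle_informative ((1 <= j)%nat /\ Ej y j)) as [_|Hn]; [|exfalso; auto].
  set (r := Hlev (Z.to_nat (y 0%nat - n 0)) j (shift y 0 (-1)) + phi y (shift y j 1)).
  replace (phi y (shift y j 1) + Hlev (Z.to_nat (y 0%nat - n 0)) j (shift y 0 (-1)) - frac_part r)
    with (r - frac_part r) by (unfold r; ring).
  apply frac_isZ.
Qed.

Lemma face0 x : inZd d x -> x 0%nat = (n 0 - 1)%Z -> (forall i, (1 <= i < d)%nat -> (n i <= x i <= K i)%Z) ->
  isZ (phi x (shift x 0 1) + Dv I1 h x).
Proof.
  intros Hx Hx0 Hxi.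
  assert (HD : Dv I1 h x = Dv I1 (FSol I1 loF hiF pF (fun v => - phi v (shift v 0 1))) x).
  { unfold Dv. apply sumL_ext. intros j Hj. apply in_I1 in Hj.
    rewrite (h_P x 0) by (simpl; pose proof (HnK 0%nat); lia).
    rewrite (h_P (shift x j (-1)) 0) by (rewrite shift_other by lia; simpl; pose proof (HnK 0%nat); lia).
    reflexivity. }
  rewrite HD.
  replace (phi x (shift x 0 1) + Dv I1 (FSol I1 loF hiF pF (fun v => - phi v (shift v 0 1))) x)
    with (Dv I1 (FSol I1 loF hiF pF (fun v => - phi v (shift v 0 1))) x - (fun v => - phi v (shift v 0 1)) x)
    by (simpl; ring).
  apply FSol_spec.
  - apply NoDup_I1.
  - intros i _. unfold loF, hiF. pose proof (HnK i). lia.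
  - apply inBoxI1. split; [|split].
    + intros i Hi. specialize (Hxi i Hi). unfold loF, hiF. lia.
    + unfold pF. simpl. auto.
    + intros i Hi. rewrite Hx by lia. unfold pF. destruct (Nat.eqb_spec i 0); lia.
  - intro E. assert (E1 := f_equal (fun v => v 1%nat) E). simpl in E1.
    unfold vstar in E1. destruct (in_dec Nat.eq_dec 1%nat I1) as [_|Hn]; [|apply Hn, in_I1; lia].
    specialize (Hxi 1%nat ltac:(lia)). unfold hiF in E1. lia.
Qed.

Lemma faceBox_nbhd C' y : CC C' -> inBoxI I1 (loH C') (hiH C') (pH C') y ->
  nbhd d C' y /\ y 0%nat = (chi C' 0 + 1)%Z /\ inZd d y.
Proof.
  intros HC' Hb. apply inBoxI1 in Hb as [B1 [B0 Bd]].
  unfold pH in B0. rewrite Nat.eqb_refl in B0.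
  assert (Hy : inZd d y). { intros i Hi. rewrite Bd by lia. unfold pH. destruct (Nat.eqb_spec i 0); lia. }
  split; [|split; auto].
  apply nbhdH; auto. split; auto. intros i Hi.
  destruct (Nat.eq_dec i 0) as [->|]; [|apply B1; lia].
  unfold loH, hiH. destruct (HCC C' HC') as [_ Hl]. specialize (Hl 0%nat). lia.
Qed.

Lemma face_arg C' v : CC C' -> nbhd d C' v -> v 0%nat = (chi C' 0 + 1)%Z ->
  v <> vstar I1 (hiH C') (pH C') -> isZ (phi v (shift v 0 1) + Dv I1 h v).
Proof.
  intros HC' Hnv Hv0 Hvs.
  assert (HB := proj1 (nbhdH C' v HC') Hnv). destruct HB as [Hv Hvb].
  destruct (Hsub0 C' HC') as [Hs1 Hs2].
  assert (Hlh := proj2 (HCC C' HC')).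
  set (s := Z.to_nat (v 0%nat - n 0)).
  set (FS := FSol I1 (loH C') (hiH C') (pH C') (ccF (Hlev s))).
  assert (Claim : forall j y, In j I1 -> (y = v \/ shift y j 1 = v) ->
             h j y = h0F (Hlev s) j y + FS j y).
  { intros j y Hj Hyv. apply in_I1 in Hj.
    assert (Hy0 : y 0%nat = v 0%nat).
    { destruct Hyv as [->|E]; auto. rewrite <- E. rewrite shift_other; auto; lia. }
    assert (Hyz : inZd d y).
    { destruct Hyv as [->|E]; auto. rewrite <- (shift_inv1 y j). rewrite E. apply inZd_shift; auto; lia. }
    rewrite (h_P y (S s)) by (unfold s; pose proof (Hlh 0%nat); lia). simpl. unfold stepH.
    destruct (excluded_middle_informative ((1 <= j)%nat /\ Ej y j)) as [[Hj1 HE]|HnE].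
    - assert (FS j y = 0).
      { apply NNPP; intro Hne. apply FSol_supp in Hne as [_ [Hb1 Hb2]].
        apply faceBox_nbhd in Hb1 as [Hb1 _]; auto. apply faceBox_nbhd in Hb2 as [Hb2 _]; auto.
        apply (Ej_char y j Hyz ltac:(lia)) in HE as [_ HE]. apply HE. exists C'; auto. }
      lra.
    - assert (h0F (Hlev s) j y = 0).
      { unfold h0F. dEM; [contradiction|auto]. }
      rewrite H. rewrite Rplus_0_l.
      unfold faceG. destruct (excluded_middle_informative (exists C'', isExit C'' y)) as [Hex|Hnex].
      + destruct (proj2_sig (constructive_indefinite_description _ Hex)) as [HC3 [Hn3 H03]].
        cbv zeta.
        set (C3 := proj1_sig (constructive_indefinite_description _ Hex)) in *.
        destruct (classic (C3 = C')) as [E|Ne].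
        * rewrite E. reflexivity.
        * assert (L : FSol I1 (loH C3) (hiH C3) (pH C3) (ccF (Hlev s)) j y = 0).
          { apply NNPP; intro Hne. apply FSol_supp in Hne as [_ [Hb1 Hb2]].
            apply faceBox_nbhd in Hb1 as [Hb1 _]; auto. apply faceBox_nbhd in Hb2 as [Hb2 _]; auto.
            apply (Hdisj C3 C' HC3 HC' Ne v). split; auto.
            destruct Hyv as [<-|<-]; auto. }
          assert (Rr : FS j y = 0).
          { apply NNPP; intro Hne. apply FSol_supp in Hne as [_ [Hb1 _]].
            apply faceBox_nbhd in Hb1 as [Hb1 _]; auto.
            apply (Hdisj C3 C' HC3 HC' Ne y). split; auto. }
          rewrite L, Rr; reflexivity.
      + apply NNPP; intro Hne. apply Hne. symmetry. apply NNPP; intro Hne2.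
        apply FSol_supp in Hne2 as [_ [Hb1 _]]. apply faceBox_nbhd in Hb1 as [Hb1 [Hb0 _]]; auto.
        apply Hnex. exists C'. split; auto. }
  assert (HD : Dv I1 h v = Dv I1 (h0F (Hlev s)) v + Dv I1 FS v).
  { unfold Dv. rewrite <- sumL_plus. apply sumL_ext. intros j Hj.
    rewrite (Claim j v Hj (or_introl eq_refl)).
    rewrite (Claim j (shift v j (-1)) Hj (or_intror (shift_inv2 v j))). ring. }
  rewrite HD.
  replace (phi v (shift v 0 1) + (Dv I1 (h0F (Hlev s)) v + Dv I1 FS v))
    with (Dv I1 FS v - ccF (Hlev s) v) by (unfold ccF; ring).
  apply FSol_spec.
  - apply NoDup_I1.
  - intros i _. unfold loH, hiH. specialize (Hlh i). lia.
  - apply inBoxI1. split; [|split].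
    + intros i Hi. apply Hvb. lia.
    + unfold pH. rewrite Nat.eqb_refl. auto.
    + intros i Hi. rewrite Hv by lia. unfold pH. destruct (Nat.eqb_spec i 0); lia.
  - exact Hvs.
Qed.

Lemma seq0_in j : In j (seq 0 d) <-> (j < d)%nat.
Proof. rewrite in_seq. lia. Qed.

Lemma eta_pos x j : (j < d)%nat -> eta x (shift x j 1) = E0 x j.
Proof.
  intros Hj. unfold eta. rewrite sumL_minus.
  rewrite (sumL_ext _ (fun j0 => if excluded_middle_informative (shift x j 1 = shift x j0 1) then E0 x j0 else 0)
             (fun j0 => if excluded_middle_informative (j0 = j) then E0 x j else 0)).
  2:{ intros j0 _. dEM; dEM; auto; try subst; try tauto.
      exfalso. apply (shift_ne x j j0 1 1); auto; lia. }
  rewrite (sumL_indicator _ (fun j0 => j0 = j) j); auto.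
  - rewrite sumL_indicator0; [ring|]. intros b _ E. apply (shift_ne x j b 1 (-1)); auto; lia.
  - apply seq_NoDup.
  - apply seq0_in; auto.
Qed.

Lemma eta_neg x j : (j < d)%nat -> eta x (shift x j (-1)) = - E0 (shift x j (-1)) j.
Proof.
  intros Hj. unfold eta. rewrite sumL_minus.
  rewrite (sumL_ext _ (fun j0 => if excluded_middle_informative (shift x j (-1) = shift x j0 (-1)) then E0 (shift x j (-1)) j0 else 0)
             (fun j0 => if excluded_middle_informative (j0 = j) then E0 (shift x j (-1)) j else 0)).
  2:{ intros j0 _. dEM; dEM; auto; try subst; try tauto.
      exfalso. apply (shift_ne x j j0 (-1) (-1)); auto; lia. }
  rewrite (sumL_indicator _ (fun j0 => j0 = j) j); auto.
  - rewrite sumL_indicator0; [ring|]. intros b _ E. apply (shift_ne x j b (-1) 1); auto; lia.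
  - apply seq_NoDup.
  - apply seq0_in; auto.
Qed.

Lemma phi_anti x y : adj d x y -> phi x y = - phi y x.
Proof. apply Hphi. Qed.

Lemma psi_anti x y : adj d x y -> psi x y = - psi y x.
Proof.
  intros Ha. unfold psi. rewrite (phi_anti x y Ha).
  destruct Ha as [Hx [j [Hj [->| ->]]]].
  - rewrite eta_pos by auto.
    replace (eta (shift x j 1) x) with (eta (shift x j 1) (shift (shift x j 1) j (-1)))
      by (rewrite shift_inv1; auto).
    rewrite eta_neg by auto. rewrite shift_inv1. ring.
  - rewrite eta_neg by auto.
    replace (eta (shift x j (-1)) x) with (eta (shift x j (-1)) (shift (shift x j (-1)) j 1))
      by (rewrite shift_inv2; auto).
    rewrite eta_pos by auto. ring.
Qed.

Lemma outflow_sum q x : outflow d q x = sumL (seq 0 d) (fun k => q x (shift x k 1) + q x (shift x k (-1))).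
Proof. reflexivity. Qed.

Lemma outflow_eta x : outflow d eta x = 0.
Proof.
  rewrite outflow_sum.
  rewrite (sumL_ext _ _ (fun k => E0 x k - E0 (shift x k (-1)) k)).
  2:{ intros k Hk. apply seq0_in in Hk. rewrite eta_pos, eta_neg by auto. ring. }
  rewrite seq0d, sumL_cons. unfold E0 at 1 2. rewrite Nat.eqb_refl.
  rewrite (sumL_ext _ _ (fun j => (h j (shift x 0 (-1)) - h j x) -
                                  (h j (shift (shift x j (-1)) 0 (-1)) - h j (shift x j (-1))))).
  2:{ intros j Hj. apply in_I1 in Hj. unfold E0. rewrite (proj2 (Nat.eqb_neq j 0)) by lia. reflexivity. }
  unfold Dv. rewrite <- sumL_minus, <- sumL_plus.
  rewrite (sumL_ext _ _ (fun _ => 0)); [apply sumL_zero|].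
  intros j _. rewrite (shift_comm x j 0 (-1) (-1)). ring.
Qed.

Lemma psi_flow : isFlow d f psi.
Proof.
  split.
  - apply psi_anti.
  - intros x Hx. destruct Hphi as [_ Hf]. rewrite Hf by auto.
    rewrite !outflow_sum. unfold psi.
    rewrite (sumL_ext _ (fun k => phi x (shift x k 1) + eta x (shift x k 1) + (phi x (shift x k (-1)) + eta x (shift x k (-1))))
                     (fun k => (phi x (shift x k 1) + phi x (shift x k (-1))) + (eta x (shift x k 1) + eta x (shift x k (-1))))).
    2:{ intros; ring. }
    rewrite (sumL_plus (seq 0 d) (fun k => phi x (shift x k 1) + phi x (shift x k (-1))) (fun k => eta x (shift x k 1) + eta x (shift x k (-1)))).
    rewrite <- (outflow_sum eta x), outflow_eta. ring.
Qed.

Lemma psi_pos x j : (j < d)%nat -> psi x (shift x j 1) = phi x (shift x j 1) + E0 x j.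
Proof. intros; unfold psi; rewrite eta_pos; auto. Qed.

Lemma H3' y j : (1 <= j)%nat -> Ej y j -> isZ (psi y (shift y j 1)).
Proof.
  intros Hj HE. destruct (Ej_inZd _ _ HE) as [_ Hjd]. rewrite psi_pos by auto.
  unfold E0. rewrite (proj2 (Nat.eqb_neq j 0)) by lia.
  eapply isZ_eq; [|apply (H3 y j Hj HE)]. ring.
Qed.

Lemma psi_pos0 x : psi x (shift x 0 1) = phi x (shift x 0 1) + Dv I1 h x.
Proof. rewrite psi_pos by lia. unfold E0. rewrite Nat.eqb_refl. auto. Qed.

Lemma nbhdH_C C' v : CC C' -> nbhd d C' v -> C v.
Proof.
  intros HC' Hv. apply nbhdH in Hv as [Hv Hb]; auto. apply HC. split; auto.
  intros i Hi. specialize (Hb i Hi). destruct (Hsub C' HC' i Hi). unfold loH, hiH in Hb. lia.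
Qed.

Lemma exit_coord C' v : CC C' -> nbhd d C' v -> ~ nbhd d C' (shift v 0 1) -> v 0%nat = (chi C' 0 + 1)%Z.
Proof.
  intros HC' Hv Hn. apply nbhdH in Hv as [Hv Hb]; auto.
  assert (Hb0 := Hb 0%nat d_pos). unfold loH, hiH in Hb0.
  destruct (Z.eq_dec (v 0%nat) (chi C' 0 + 1)) as [E|Ne]; auto. exfalso. apply Hn.
  apply nbhdH; auto. split; [apply inZd_shift; auto; lia|].
  intros i Hi. unfold shift. destruct (Nat.eqb_spec i 0); [subst; unfold loH, hiH; lia|]. apply Hb; auto.
Qed.

Lemma Box_seq0 lo hi v : inBoxI (seq 0 d) lo hi (fun _ => 0%Z) v <-> Box d lo hi v.
Proof.
  unfold inBoxI, Box. split.
  - intros [H1 H2]. split.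
    + intros i Hi. apply H2. rewrite seq0_in. lia.
    + intros i Hi. apply H1, seq0_in; auto.
  - intros [H1 H2]. split.
    + intros i Hi. apply H2, seq0_in; auto.
    + intros i Hi. apply H1. rewrite seq0_in in Hi. lia.
Qed.

Lemma Ej_free y j : inZd d y -> (j < d)%nat -> (C y \/ C (shift y j 1)) ->
  (forall C', CC C' -> ~ nbhd d C' y \/ ~ nbhd d C' (shift y j 1)) -> Ej y j.
Proof.
  intros Hy Hj Hc Hn. apply Ej_char; auto. split; auto.
  intros [C' [HC' [H1 H2]]]. destruct (Hn C' HC'); auto.
Qed.

Lemma prop0 : forall m x, inZd d x -> x 0%nat = (n 0 - 1 + Z.of_nat m)%Z -> Ej x 0 ->
  isZ (psi x (shift x 0 1)).
Proof.
  intro m. induction m as [m IH] using (well_founded_induction lt_wf).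
  intros x Hx Hxm HE.
  destruct (proj1 (Ej_char x 0 Hx d_pos) HE) as [Hc Hn].
  destruct (Nat.eq_dec m 0) as [->|Hm].
  - rewrite psi_pos0. apply face0; auto. lia.
    intros i Hi. destruct Hc as [Hc|Hc]; apply C_coords in Hc as [_ Hc].
    + specialize (Hc 0%nat d_pos). lia.
    + specialize (Hc i ltac:(lia)). rewrite shift_other in Hc by lia. auto.
  - assert (HCx : C x).
    { destruct Hc as [Hc|Hc]; auto. apply C_coords in Hc as [_ Hc]. apply HC. split; auto.
      intros i Hi. specialize (Hc i Hi). destruct (Nat.eq_dec i 0) as [->|]; [rewrite shift_at in Hc; lia|].
      rewrite shift_other in Hc; auto. }
    destruct (classic (exists C', CC C' /\ nbhd d C' x)) as [[C' [HC' HnC']]|Hno].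
    + assert (Hnx : ~ nbhd d C' (shift x 0 1)) by (intro; apply Hn; exists C'; auto).
      assert (Hx0 := exit_coord C' x HC' HnC' Hnx).
      destruct (classic (x = vstar I1 (hiH C') (pH C'))) as [Ex|Nx].
      * apply (flux_lemma d (boxList (seq 0 d) (loH C') (hiH C') (fun _ => 0%Z)) (nbhd d C') psi x).
        -- apply boxList_NoDup, seq_NoDup.
        -- intro v. rewrite boxList_In by apply seq_NoDup. rewrite Box_seq0. symmetry. apply nbhdH; auto.
        -- intros v Hv. apply nbhdH in Hv as [Hv _]; auto.
        -- apply psi_anti.
        -- intros v Hv. destruct psi_flow as [_ Hf]. rewrite <- Hf. apply isZ_IZR.
           apply nbhdH in Hv as [Hv _]; auto.
        -- intros k v Hk Hv Hnv. apply H3'; [lia|]. apply Ej_free; auto.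
           ++ apply nbhdH in Hv as [Hv _]; auto.
           ++ lia.
           ++ left. eapply nbhdH_C; eauto.
           ++ intros C'' HC''. destruct (classic (C'' = C')) as [->|Ne]; [right; auto|].
              left. intro. apply (Hdisj C'' C' HC'' HC' Ne v); auto.
        -- intros k u Hk Hu Hnu Hsu.
           assert (HEu : Ej u k).
           { apply Ej_free; auto. right. eapply nbhdH_C; eauto.
             intros C'' HC''. destruct (classic (C'' = C')) as [->|Ne]; [left; auto|].
             right. intro. apply (Hdisj C'' C' HC'' HC' Ne (shift u k 1)); auto. }
           destruct (Nat.eq_dec k 0) as [->|Hk0]; [|apply H3'; auto; lia].
           assert (Hub := proj1 (nbhdH C' _ HC') Hsu). destruct Hub as [_ Hub].
           specialize (Hub 0%nat d_pos). rewrite shift_at in Hub. unfold loH, hiH in Hub.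
           destruct (Hsub0 C' HC').
           apply (IH (Z.to_nat (u 0%nat - n 0 + 1))); auto; lia.
        -- intros v Hv Hnv Hne. rewrite psi_pos0. apply (face_arg C'); auto.
           ++ apply exit_coord; auto.
           ++ rewrite <- Ex; auto.
        -- auto.
        -- auto.
        -- lia.
      * rewrite psi_pos0. apply (face_arg C'); auto.
    + assert (Hfree : forall y, (forall C', CC C' -> ~ nbhd d C' y) -> True) by auto.
      assert (Hnox : forall C', CC C' -> ~ nbhd d C' x) by (intros C' H1 H2; apply Hno; eauto).
      destruct psi_flow as [_ Hf]. specialize (Hf x Hx).
      rewrite outflow_sum, seq0d, sumL_cons in Hf.
      assert (Hm1 : isZ (psi x (shift x 0 (-1)))).
      { rewrite (psi_anti x (shift x 0 (-1))).
        2:{ split; auto. exists 0%nat; split; [lia|right; auto]. }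
        apply isZ_opp. rewrite <- (shift_inv2 x 0) at 2.
        apply (IH (m - 1)%nat); [lia| apply inZd_shift; auto; lia | rewrite shift_at; lia |].
        apply Ej_free; [apply inZd_shift; auto; lia|lia| rewrite shift_inv2; auto|].
        intros C'' HC''. right. rewrite shift_inv2. auto. }
      assert (Hrest : isZ (sumL I1 (fun k => psi x (shift x k 1) + psi x (shift x k (-1))))).
      { apply sumL_isZ. intros k Hk. apply in_I1 in Hk. apply isZ_add.
        - apply H3'; [lia|]. apply Ej_free; [auto|lia|left; auto|intros C'' HC''; left; auto].
        - rewrite (psi_anti x (shift x k (-1))).
          2:{ split; auto. exists k; split; [lia|right; auto]. }
          apply isZ_opp. rewrite <- (shift_inv2 x k) at 2. apply H3'; [lia|].
          apply Ej_free; [apply inZd_shift; auto; lia|lia| rewrite shift_inv2; auto|].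
          intros C'' HC''. right. rewrite shift_inv2. auto. }
      replace (psi x (shift x 0 1)) with
        (IZR (f x) - psi x (shift x 0 (-1)) - sumL I1 (fun k => psi x (shift x k 1) + psi x (shift x k (-1))))
        by (rewrite Hf; ring).
      apply isZ_sub; [apply isZ_sub; [apply isZ_IZR|auto]|auto].
Qed.

Lemma E0_bound a j : (j < d)%nat -> Rabs (E0 a j) <= INR d.
Proof.
  intros Hj. unfold E0. destruct (Nat.eqb_spec j 0).
  - unfold Dv. eapply Rle_trans; [apply (sumL_abs_le _ _ 1)|].
    + intros j' _. destruct (h_bounds j' a), (h_bounds j' (shift a j' (-1))).
      apply Rabs_le. lra.
    + unfold I1. rewrite length_seq. rewrite Rmult_1_r. apply le_INR. lia.
  - destruct (h_bounds j a), (h_bounds j (shift a 0 (-1))).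
    apply Rle_trans with 1. apply Rabs_le. lra.
    replace 1 with (INR 1) by reflexivity. apply le_INR. lia.
Qed.

Lemma main_sec : exists psi : pt -> pt -> R,
    isFlow d f psi /\
    suppIn d (fun x y => phi x y - psi x y) (edges d (nbhd d C)) /\
    (forall C', CC C' -> forall x y, adj d x y ->
        (edgesP d C' x y \/ edgesP d C' y x) -> phi x y - psi x y = 0) /\
    (forall x y, Eed x y -> exists z : Z, psi x y = IZR z) /\
    (forall x y, adj d x y -> Rabs (phi x y - psi x y) < 6 * INR d).
Proof.
  exists psi. split; [apply psi_flow|split; [|split; [|split]]].
  - intros x y Hadj HnE1 HnE2. unfold psi.
    destruct Hadj as [Hx [j [Hj [->| ->]]]].
    + rewrite eta_pos by auto. destruct (Req_dec (E0 x j) 0) as [E|E]; [rewrite E; ring|].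
      exfalso. apply E0_good in E as [[G1 _] [G2 _]]; auto. apply HnE1. split; auto.
      exists j; auto.
    + rewrite eta_neg by auto. destruct (Req_dec (E0 (shift x j (-1)) j) 0) as [E|E]; [rewrite E; ring|].
      exfalso. apply E0_good in E as [[G1 _] [G2 _]]; auto; [|apply inZd_shift; auto].
      rewrite shift_inv2 in G2. apply HnE2. split; [apply inZd_shift; auto|].
      exists j. rewrite shift_inv2. auto.
  - intros C' HC' x y Hadj [[Hx [j [Hj [-> Hc]]]]|[Hy [j [Hj [-> Hc]]]]]; unfold psi.
    + rewrite eta_pos by auto. destruct (Req_dec (E0 x j) 0) as [E|E]; [rewrite E; ring|].
      exfalso. apply E0_good in E as [[_ G1] [_ G2]]; auto. destruct Hc as [Hc|Hc].
      * eapply G1; eauto.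
      * eapply G2; eauto.
    + replace (eta (shift y j 1) y) with (eta (shift y j 1) (shift (shift y j 1) j (-1))) by (rewrite shift_inv1; auto).
      rewrite eta_neg by auto. rewrite shift_inv1.
      destruct (Req_dec (E0 y j) 0) as [E|E]; [rewrite E; ring|].
      exfalso. apply E0_good in E as [[_ G1] [_ G2]]; auto. destruct Hc as [Hc|Hc].
      * eapply G1; eauto.
      * eapply G2; eauto.
  - intros x y HE. assert (HE' := HE). destruct HE' as [[Hx [j [Hj [-> Hc]]]] _].
    assert (HEj : Ej x j) by exact HE.
    destruct (Nat.eq_dec j 0) as [->|Hj0].
    + assert (Hx0 : (n 0 - 1 <= x 0%nat)%Z).
      { destruct Hc as [Hc|Hc]; apply C_coords in Hc as [_ Hc]; specialize (Hc 0%nat d_pos); auto.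
        - lia.
        - rewrite shift_at in Hc. lia. }
      apply (prop0 (Z.to_nat (x 0%nat - n 0 + 1)) x Hx); auto. lia.
    + apply H3'; auto. lia.
  - intros x y Hadj. unfold psi. replace (phi x y - (phi x y + eta x y)) with (- eta x y) by ring.
    rewrite Rabs_Ropp.
    assert (HdR : 2 <= INR d) by (replace 2 with (INR 2) by reflexivity; apply le_INR; lia).
    destruct Hadj as [Hx [j [Hj [->| ->]]]].
    + rewrite eta_pos by auto. eapply Rle_lt_trans; [apply E0_bound; auto|lra].
    + rewrite eta_neg by auto. rewrite Rabs_Ropp. eapply Rle_lt_trans; [apply E0_bound; auto|lra].
Qed.

End Main.

Lemma cube_data d A : isCube d A ->
  { lo : nat -> Z & { hi : nat -> Z | (forall v, A v <-> Box d lo hi v) /\ forall i, (lo i <= hi i)%Z } }.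
Proof.
  intros H. apply constructive_indefinite_description in H as [lo H].
  apply constructive_indefinite_description in H as [k [Hk H]].
  exists lo, (fun i => lo i + k i)%Z. split; [exact H|]. intro i. specialize (Hk i). lia.
Qed.

Definition cLo d (A : pset) : nat -> Z :=
  match excluded_middle_informative (isCube d A) with
  | left H => projT1 (cube_data d A H)
  | right _ => fun _ => 0%Z end.
Definition cHi d (A : pset) : nat -> Z :=
  match excluded_middle_informative (isCube d A) with
  | left H => proj1_sig (projT2 (cube_data d A H))
  | right _ => fun _ => 0%Z end.

Lemma cube_spec d A : isCube d A ->
  (forall v, A v <-> Box d (cLo d A) (cHi d A) v) /\ forall i, (cLo d A i <= cHi d A i)%Z.
Proof.
  intros H. unfold cLo, cHi. destruct excluded_middle_informative as [H'|]; [|contradiction].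
  exact (proj2_sig (projT2 (cube_data d A H'))).
Qed.

Lemma box_sub d lo1 hi1 lo2 hi2 : (forall x, Box d lo1 hi1 x -> Box d lo2 hi2 x) ->
  (forall i, (lo1 i <= hi1 i)%Z) -> forall i, (i < d)%nat -> (lo2 i <= lo1 i)%Z /\ (hi1 i <= hi2 i)%Z.
Proof.
  intros Hs Hlh i Hi. split.
  - assert (Hb : Box d lo1 hi1 (fun j => if (j <? d)%nat then lo1 j else 0%Z)).
    { split. intros j Hj. destruct (Nat.ltb_spec j d); lia.
      intros j Hj. destruct (Nat.ltb_spec j d); [|lia]. specialize (Hlh j). lia. }
    apply Hs in Hb as [_ Hb]. specialize (Hb i Hi). destruct (Nat.ltb_spec i d); lia.
  - assert (Hb : Box d lo1 hi1 (fun j => if (j <? d)%nat then hi1 j else 0%Z)).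
    { split. intros j Hj. destruct (Nat.ltb_spec j d); lia.
      intros j Hj. destruct (Nat.ltb_spec j d); [|lia]. specialize (Hlh j). lia. }
    apply Hs in Hb as [_ Hb]. specialize (Hb i Hi). destruct (Nat.ltb_spec i d); lia.
Qed.

Theorem mainTheorem6
  (d : nat) (hd : (2 <= d)%nat)
  (C : pset) (hC : isCube d C)
  (CC : pset -> Prop)
  (hCC : forall C', CC C' -> isCube d C')
  (hsub : forall C', CC C' -> forall x, nbhd d C' x -> C x)
  (hdisj : forall C' C'', CC C' -> CC C'' -> C' <> C'' ->
             forall x, ~ (nbhd d C' x /\ nbhd d C'' x))
  (f : pt -> Z) (phi : pt -> pt -> R)
  (hphi : isFlow d f phi) (hbdd : boundedFlow d phi) :
  let E := fun x y => edgesP d C x y /\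
             ~ (exists C', CC C' /\ edges d (nbhd d C') x y) in
  exists psi : pt -> pt -> R,
    isFlow d f psi /\
    suppIn d (fun x y => phi x y - psi x y) (edges d (nbhd d C)) /\
    (forall C', CC C' -> forall x y, adj d x y ->
        (edgesP d C' x y \/ edgesP d C' y x) -> phi x y - psi x y = 0) /\
    (forall x y, E x y -> exists z : Z, psi x y = IZR z) /\
    (forall x y, adj d x y -> Rabs (phi x y - psi x y) < 6 * INR d).
Proof.
  intros E.
  destruct (cube_spec d C hC) as [HC HnK].
  assert (HCC : forall C', CC C' ->
     (forall v, C' v <-> Box d (cLo d C') (cHi d C') v) /\ (forall i, (cLo d C' i <= cHi d C' i)%Z)).
  { intros C' H. apply cube_spec, hCC; auto. }
  assert (Hsub : forall C', CC C' -> forall i, (i < d)%nat ->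
     (cLo d C i + 1 <= cLo d C' i)%Z /\ (cHi d C' i + 1 <= cHi d C i)%Z).
  { intros C' H' i Hi. destruct (HCC C' H') as [H1 H2].
    assert (Hs : forall x, Box d (fun i => cLo d C' i - 1)%Z (fun i => cHi d C' i + 1)%Z x ->
                           Box d (cLo d C) (cHi d C) x).
    { intros x Hx. apply HC. apply (hsub C' H'). apply (nbhd_box d C' (cLo d C') (cHi d C')); auto. }
    destruct (box_sub _ _ _ _ _ Hs) with (i := i) as [A1 A2]; auto.
    intros j. specialize (H2 j). lia. lia. }
  exact (main_sec d (cLo d C) (cHi d C) C CC (cLo d) (cHi d) f phi hd HC HnK HCC Hsub hdisj hphi).
Qed.
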